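(* Let $\Psi\subseteq\Omega$ be nonempty, $D=D(\Psi)$, $B\subseteq D$, and let $c=(c_{\underline\psi})_\Psi\in C^\perp(V_B,\Psi)$, i.e. $\sum_{\underline\psi\in\Psi}c_{\underline\psi}\underline\psi^{\underline b}=0$ for all $\underline b\in B$. Let $h=(h_{\underline d})_D=\mathcal{P}_\Psi(c)$ (so $c=\mathcal{C}_\Psi(h)$). Let $\emptyset\neq\Phi\subseteq\Psi$ with $D(\Phi)\subseteq B$, let $e=(e_{\underline\psi})_\Psi\in V_\Psi$ with $e_{\underline\psi}=0$ for $\underline\psi\notin\Phi$, let $r=c+e$, and put $\tilde r_{\underline d}=\sum_{\underline\psi\in\Psi}r_{\underline\psi}\underline\psi^{\underline d}$ for $\underline d\in D$. Then: (i) $h_{\underline b}=0$ and $\tilde r_{\underline b}=\sum_{\underline\phi\in\Phi}e_{\underline\phi}\underline\phi^{\underline b}$ for all $\underline b\in B$; (ii) if $(k_{\underline a})_A=\mathcal{E}_\Phi\big((\tilde r_{\underline d})_{\underline d\in D(\Phi)}\big)$, then $h_{\underline d}=\tilde r_{\underline d}-k_{\underline d}$ for all $\underline d\in D$; (iii) $\mathcal{C}_\Phi\big((\tilde r_{\underline d})_{\underline d\in D(\Phi)}\big)=(e_{\underline\phi})_{\underline\phi\in\Phi}$, hence $c$ is recovered as $r$ minus the extension by zero of this vector.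
   Context: Let $q$ be a prime power, $N\ge1$, $A=\{0,\dots,q-1\}^N$, $\Omega=\mathbb{F}_q^N$, $V_S$ the $\mathbb{F}_q$-vector space of vectors indexed by a finite set $S$; $\underline\psi^{\underline d}=\psi_1^{d_1}\cdots\psi_N^{d_N}$ with $0^0=1$. Fix a monomial order $\preceq$ on $\mathbb{F}_q[x_1,\dots,x_N]$. For nonempty $\Theta\subseteq\Omega$: $Z_\Theta$ is the ideal of polynomials vanishing on $\Theta$; the delta set $D(\Theta)$ is the set of $\underline d\in\mathbb{N}_0^N$ with $\underline x^{\underline d}$ not the leading monomial of a nonzero element of $Z_\Theta$ (note $D(\Theta)\subseteq A$, and $D(\Phi)\subseteq D(\Psi)$ for $\Phi\subseteq\Psi$); $\mathcal{P}_\Theta:V_\Theta\to V_{D(\Theta)}$, $(c_{\underline\theta})\mapsto(\sum_{\underline\theta\in\Theta}c_{\underline\theta}\underline\theta^{\underline d})_{\underline d\in D(\Theta)}$ is an isomorphism and $\mathcal{C}_\Theta=\mathcal{P}_\Theta^{-1}$, which equals $\mathcal{R}_\Theta\circ\mathcal{F}^{-1}\circ\mathcal{E}_\Theta$ where $\mathcal{R}_\Theta$ is restriction to $\Theta$, $\mathcal{F}^{-1}$ is the generalized inverse DFT $V_A\to V_\Omega$, and $\mathcal{E}_\Theta:V_{D(\Theta)}\to V_A$ is the extension map: $(h_{\underline d})\mapsto(h_{\underline a})_A$ with $h_{\underline a}=\sum_{\underline d\in D(\Theta)}v^{(\underline a)}_{\underline d}h_{\underline d}$, where $\sum_{\underline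 d}v^{(\underline a)}_{\underline d}\underline x^{\underline d}$ is the remainder of $\underline x^{\underline a}$ on division by a Gröbner basis of $Z_\Theta$. For $B\subseteq D(\Psi)$, $C^\perp(V_B,\Psi)=\{(c_{\underline\psi})_\Psi:\sum_{\underline\psi}c_{\underline\psi}\underline\psi^{\underline b}=0\ \forall\underline b\in B\}$. *)

(* Defs.v *)
From HB Require Import structures.
From mathcomp Require Import all_boot all_order all_algebra.
From Stdlib Require Import ClassicalEpsilon.
Set Implicit Arguments. Unset Strict Implicit. Unset Printing Implicit Defensive.
Import GRing.Theory.
Local Open Scope ring_scope.

Definition pdec (P : Prop) : bool :=
  if excluded_middle_informative P then true else false.

Section Defs.
Variables (F : finFieldType) (N : nat).

Definition mono := {ffun 'I_N -> nat}.
Definition madd (a b : mono) : mono := [ffun i => (a i + b i)%N].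
Definition mzero : mono := [ffun _ => 0%N].

Definition pt := 'rV[F]_N.

(* psi^d = prod_i psi_i^{d_i}, with 0^0 = 1 *)
Definition mpow (x : pt) (d : mono) : F := \prod_(i < N) (x ord0 i) ^+ (d i).

(* A = {0,...,q-1}^N, q = #|F|, as a finite type, embedded into mono *)
Definition Aq := {ffun 'I_N -> 'I_#|F|}.
Definition embed (a : Aq) : mono := [ffun i => nat_of_ord (a i)].

Definition monomial_order (le : rel mono) : Prop :=
  [/\ reflexive le, antisymmetric le, transitive le & total le] /\
  (forall a b c, le a b -> le (madd a c) (madd b c)) /\
  well_founded (fun a b => le a b && (a != b)).

(* a polynomial is given by a list of monomials s and coefficients c:
   p = sum_{m in undup s} c m x^m *)
Definition peval (s : seq mono) (c : mono -> F) (x : pt) : F :=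
  \sum_(m <- undup s) c m * mpow x m.

Definition vanishes (Theta : {set pt}) (s : seq mono) (c : mono -> F) : Prop :=
  forall x, x \in Theta -> peval s c x = 0.

Definition isLM (le : rel mono) (Theta : {set pt}) (d : mono) : Prop :=
  exists (s : seq mono) (c : mono -> F),
    [/\ vanishes Theta s c, d \in s, c d != 0
      & forall m, m \in s -> c m != 0 -> le m d].

(* the delta set D(Theta) (which is contained in A) *)
Definition Dset (le : rel mono) (Theta : {set pt}) : {set Aq} :=
  [set a : Aq | pdec (~ isLM le Theta (embed a))].

(* the map P_Theta : V_Theta -> V_{D(Theta)} (vectors are functions;
   only indices in Theta, resp. D(Theta), are relevant) *)
Definition Pmap (Theta : {set pt}) (c : pt -> F) (d : Aq) : F :=
  \sum_(x in Theta) c x * mpow x (embed d).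

(* v gives the remainders: for each a in A, sum_{d in D(Theta)} v a d x^d is the
   remainder of x^a modulo a Groebner basis of Z_Theta, i.e. the polynomial
   supported on D(Theta) with x^a - remainder in Z_Theta. *)
Definition is_remainder (le : rel mono) (Theta : {set pt}) (v : Aq -> Aq -> F) : Prop :=
  forall a : Aq, vanishes Theta (embed a :: [seq embed d | d <- enum (Dset le Theta)])
    (fun m => (if m == embed a then 1 else 0)
              - \sum_(d in Dset le Theta | embed d == m) v a d).

Definition Emap (le : rel mono) (Theta : {set pt}) (v : Aq -> Aq -> F)
  (h : Aq -> F) (a : Aq) : F :=
  \sum_(d in Dset le Theta) v a d * h d.

End Defs.

(* Main.v *)
Require Import Defs.
From HB Require Import structures.
From mathcomp Require Import all_boot all_order all_algebra all_field.
From Stdlib Require Import Classical ClassicalEpsilon.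
Import GRing.Theory.
Set Implicit Arguments. Unset Strict Implicit.
Local Open Scope ring_scope.

Section Helpers.
Variables (F : finFieldType) (N : nat).
Implicit Types (y : pt F N) (a b : mono N).

Lemma mpow_madd y a b : mpow y (madd a b) = mpow y a * mpow y b.
Proof. by rewrite /mpow -big_split /=; apply: eq_bigr => i _; rewrite ffunE exprD. Qed.

Lemma mpow0 y : mpow y (mzero N) = 1.
Proof. by rewrite /mpow; apply: big1 => i _; rewrite ffunE expr0. Qed.

Definition Span (f : pt F N -> F) : Prop :=
  exists l : seq (F * mono N), forall y, f y = \sum_(p <- l) p.1 * mpow y p.2.

Lemma Span_const (k : F) : Span (fun _ => k).
Proof. by exists [:: (k, mzero N)] => y; rewrite big_seq1 /= mpow0 mulr1. Qed.

Lemma Span_add f g : Span f -> Span g -> Span (fun y => f y + g y).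
Proof.
move=> [l1 H1] [l2 H2]; exists (l1 ++ l2) => y; by rewrite big_cat H1 H2.
Qed.

Lemma Span_mul f g : Span f -> Span g -> Span (fun y => f y * g y).
Proof.
move=> [l1 H1] [l2 H2].
exists [seq (p.1 * q.1, madd p.2 q.2) | p <- l1, q <- l2] => y.
rewrite H1 H2 big_allpairs_dep /= mulr_suml; apply: eq_bigr => p _.
rewrite mulr_sumr; apply: eq_bigr => q _ /=.
by rewrite mpow_madd mulrACA.
Qed.

Lemma Span_coord (i : 'I_N) : Span (fun y => y ord0 i).
Proof.
exists [:: (1, [ffun j => nat_of_bool (j == i)])] => y.
rewrite big_seq1 /= mul1r /mpow (bigD1 i) //= ffunE eqxx expr1 big1 ?mulr1 //.
by move=> j /negbTE Hj; rewrite ffunE Hj expr0.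
Qed.

Lemma Span_ext f g : Span f -> (forall y, f y = g y) -> Span g.
Proof. by move=> [l H] E; exists l => y; rewrite -E. Qed.
Arguments Span_ext {f g}.

Lemma Span_exp f n : Span f -> Span (fun y => f y ^+ n).
Proof.
move=> Hf; elim: n => [|n IH].
  by apply: (Span_const 1).
by apply: (Span_ext (Span_mul Hf IH)) => y; rewrite exprS.
Qed.

Lemma Span_prod (g : 'I_N -> pt F N -> F) (s : seq 'I_N) :
  (forall i, Span (g i)) -> Span (fun y => \prod_(i <- s) g i y).
Proof.
move=> Hg; elim: s => [|i s IH].
  by apply: (Span_ext (Span_const 1)) => y; rewrite big_nil.
by apply: (Span_ext (Span_mul (Hg i) IH)) => y; rewrite big_cons.
Qed.


Definition mscale (k : nat) a : mono N := [ffun j => (k * a j)%N].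

Lemma le0 (le : rel (mono N)) : monomial_order le -> forall u, le (mzero N) u.
Proof.
move=> [[Hrefl Hanti Htr Htot] [Hcomp Hwf]] u.
case/orP: (Htot (mzero N) u) => // Hu0.
case: (eqVneq u (mzero N)) => [->|Hne]; first exact: Hrefl.
exfalso.
have Hstep : forall k, le (mscale k.+1 u) (mscale k u) && (mscale k.+1 u != mscale k u).
  move=> k; apply/andP; split.
    have := Hcomp _ _ (mscale k u) Hu0.
    have -> : madd u (mscale k u) = mscale k.+1 u.
      by apply/ffunP => j; rewrite !ffunE mulSn.
    suff -> : madd (mzero N) (mscale k u) = mscale k u by [].
    by apply/ffunP => j; rewrite !ffunE.
  apply: contra Hne => /eqP E; apply/eqP/ffunP => j.
  have := congr1 (fun f : mono N => f j) E; rewrite !ffunE mulSn => /eqP.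
  by rewrite -{2}(add0n (k * u j)%N) eqn_add2r => /eqP ->.
suff : forall a, Acc (fun a b => le a b && (a != b)) a -> forall k, a = mscale k u -> False.
  by move=> H; apply: (H _ (Hwf (mscale 0 u)) 0%N).
move=> a; elim=> {}a _ IH k Ea.
by apply: (IH (mscale k.+1 u)) _ k.+1 erefl; rewrite Ea.
Qed.

Lemma wf_min (le : rel (mono N)) (P : mono N -> Prop) :
  well_founded (fun a b => le a b && (a != b)) ->
  (exists m, P m) ->
  exists m, P m /\ forall m', le m' m && (m' != m) -> ~ P m'.
Proof.
move=> Hwf [m Pm]; elim: (Hwf m) Pm => {}m _ IH Pm.
case: (classic (exists m', (le m' m && (m' != m)) /\ P m')) => [[m' [H1 H2]]|Hn].
  exact: IH H1 H2.
exists m; split => // m' H1 H2; apply: Hn; exists m'; by split.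
Qed.

Lemma card_gt1 : (1 < #|F|)%N.
Proof. exact: card_finNzRing_gt1. Qed.

Lemma expq1 (t : F) : t != 0 -> t ^+ (#|F|.-1) = 1.
Proof.
move=> Ht; apply: (mulfI Ht); rewrite mulr1 -exprS prednK ?expf_card //.
by apply: ltn_trans card_gt1.
Qed.

Lemma expq_shift (t : F) k : (0 < k)%N -> t ^+ (k + #|F|.-1) = t ^+ k.
Proof.
move=> Hk; rewrite -(prednK Hk) addSn -addnS prednK; last by apply: ltn_trans card_gt1.
by rewrite exprD expf_card exprS mulrC.
Qed.


Definition Lf (Phi : {set pt F N}) (z : pt F N -> F) (m : mono N) : F :=
  \sum_(x in Phi) z x * mpow x m.

Lemma Lf_span (Phi : {set pt F N}) z (l : seq (F * mono N)) :
  \sum_(x in Phi) z x * (\sum_(p <- l) p.1 * mpow x p.2) =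
  \sum_(p <- l) p.1 * Lf Phi z p.2.
Proof.
under eq_bigr do rewrite mulr_sumr.
rewrite exchange_big; apply: eq_bigr => p _.
rewrite /Lf mulr_sumr; apply: eq_bigr => x _; by rewrite mulrCA.
Qed.

Lemma Lf_span2 (Phi : {set pt F N}) z (l : seq (mono N)) (c : mono N -> F) :
  \sum_(x in Phi) z x * (\sum_(m <- l) c m * mpow x m) =
  \sum_(m <- l) c m * Lf Phi z m.
Proof.
under eq_bigr do rewrite mulr_sumr.
rewrite exchange_big; apply: eq_bigr => p _.
rewrite /Lf mulr_sumr; apply: eq_bigr => x _; by rewrite mulrCA.
Qed.

Lemma exists_L (Phi : {set pt F N}) z phi0 : phi0 \in Phi -> z phi0 != 0 ->
  exists m, Lf Phi z m != 0.
Proof.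
move=> Hphi Hz.
pose g (i : 'I_N) (y : pt F N) := 1 - (y ord0 i - phi0 ord0 i) ^+ (#|F|.-1).
pose delta y := \prod_(i <- enum 'I_N) g i y.
have Sd : Span delta.
  apply: Span_prod => i.
  apply: (Span_ext (Span_add (Span_const 1) (Span_mul (Span_const (-1))
     (Span_exp (#|F|.-1) (Span_add (Span_coord i) (Span_const (- phi0 ord0 i))))))).
  by move=> y; rewrite /g mulN1r.
have d0 : delta phi0 = 1.
  rewrite /delta big1 // => i _; rewrite /g subrr expr0n /=.
  have -> : (#|F|.-1 == 0%N) = false.
    by apply/negbTE; rewrite -lt0n -ltnS prednK ?card_gt1 // ltnW // card_gt1.
  by rewrite subr0.
have d1 : forall y, y != phi0 -> delta y = 0.
  move=> y Hy.
  have [i Hi] : exists i, y ord0 i != phi0 ord0 i.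
    apply/existsP; move: Hy; apply: contraR => /existsPn H.
    apply/eqP/rowP => j; apply/eqP; move: (H j); by rewrite negbK.
  rewrite /delta (bigD1_seq i) ?mem_enum ?enum_uniq //= /g expq1 ?subr_eq0 //.
  by rewrite subrr mul0r.
case: Sd => l Hl.
have : \sum_(x in Phi) z x * delta x = z phi0.
  rewrite (bigD1 phi0) //= d0 mulr1 big1 ?addr0 // => x /andP [_ Hx].
  by rewrite d1 // mulr0.
under eq_bigr do rewrite Hl.
rewrite Lf_span => E.
apply: NNPP => Hn; move: Hz; rewrite -E big1 ?eqxx // => p _.
case: (eqVneq (Lf Phi z p.2) 0) => [->|H]; first by rewrite mulr0.
by exfalso; apply: Hn; exists p.2.
Qed.


Lemma pdec_false (P : Prop) : pdec P = false -> ~ P.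
Proof. by rewrite /pdec; case: excluded_middle_informative. Qed.

Lemma key (le : rel (mono N)) (Hle : monomial_order le) (Phi : {set pt F N})
  (z : pt F N -> F) :
  (forall d, d \in Dset le Phi -> Lf Phi z (embed d) = 0) ->
  forall phi, phi \in Phi -> z phi = 0.
Proof.
move=> HD phi0 Hphi; apply/eqP; apply: contraT => Hz.
have Hwf := (Hle.2.2).
have [m [Lm Hmin]] := wf_min (P := fun m => Lf Phi z m != 0) Hwf (exists_L Hphi Hz).
have Hmin' : forall m', le m' m -> m' != m -> Lf Phi z m' = 0.
  move=> m' H1 H2; apply/eqP; apply: NNPP => H; apply: (Hmin m').
    by rewrite H1 H2.
  by apply/negP.
have q1 : (0 < #|F|.-1)%N by rewrite -ltnS prednK ?card_gt1 // ltnW // card_gt1.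
case: (classic (exists i, (#|F| <= m i)%N)) => [[i Hi]|Hall].
  pose w : mono N := [ffun j => if j == i then #|F|.-1 else 0%N].
  pose mm : mono N := [ffun j => if j == i then (m i - #|F|.-1)%N else m j].
  have Em : m = madd w mm.
    apply/ffunP => j; rewrite !ffunE; case: eqP => [->|] //.
    by rewrite subnKC // (leq_trans (leq_pred _)).
  have Hk : (0 < m i - #|F|.-1)%N.
    by rewrite subn_gt0 (leq_trans _ Hi) // ltn_predL; apply: ltnW; apply: card_gt1.
  have Lmm : Lf Phi z mm = Lf Phi z m.
    apply: eq_bigr => x _; congr (_ * _); rewrite /mpow; apply: eq_bigr => j _.
    rewrite ffunE; case: eqP => [->|] //.
    by rewrite -expq_shift // subnK // (leq_trans (leq_pred _)).
  have Hlm : le mm m.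
    have := Hle.2.1 _ _ mm (le0 Hle w).
    have -> : madd (mzero N) mm = mm by apply/ffunP => j; rewrite !ffunE.
    by rewrite -Em.
  have Hne : mm != m.
    apply/negP => /eqP E; have := congr1 (fun f : mono N => f i) E.
    rewrite ffunE eqxx => E2.
    have : (m i - #|F|.-1 < m i)%N by rewrite ltn_subrL q1 (leq_trans _ Hi) // ltnW // card_gt1.
    by rewrite E2 ltnn.
  by move: Lm; rewrite -Lmm (Hmin' _ Hlm Hne) eqxx.
have Hlt : forall j, (m j < #|F|)%N.
  move=> j; rewrite ltnNge; apply/negP => H; apply: Hall; by exists j.
pose a : Aq F N := [ffun j => Ordinal (Hlt j)].
have Ea : embed a = m by apply/ffunP => j; rewrite !ffunE.
case: (boolP (a \in Dset le Phi)) => Ha.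
  by have H0 := HD a Ha; rewrite Ea in H0; rewrite H0 eqxx in Lm.
have : isLM le Phi (embed a).
  apply: NNPP; apply: pdec_false; move: Ha; rewrite inE; exact: negbTE.
rewrite Ea => -[s [c [Hvan Hms Hcm Hlead]]].
have : \sum_(x in Phi) z x * peval s c x = 0.
  by rewrite big1 // => x Hx; rewrite Hvan // mulr0.
rewrite /peval Lf_span2 (bigD1_seq m) ?mem_undup ?undup_uniq //= big1_seq.
  rewrite addr0 => /eqP; rewrite mulf_eq0 (negbTE Hcm) (negbTE Lm) //.
move=> m'' /andP [Hne Hin]; case: (eqVneq (c m'') 0) => [->|Hc]; first by rewrite mul0r.
by rewrite Hmin' ?mulr0 // Hlead // -mem_undup.
Qed.


Lemma rem_eval (le : rel (mono N)) (Phi : {set pt F N}) v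
  (Hv : is_remainder le Phi v) (a : Aq F N) (phi : pt F N) : phi \in Phi ->
  mpow phi (embed a) = \sum_(d in Dset le Phi) v a d * mpow phi (embed d).
Proof.
move=> Hphi; have := Hv a phi Hphi; rewrite /peval.
set s := (embed a :: _).
have Has : embed a \in undup s by rewrite mem_undup inE eqxx.
have Hds : forall d, d \in Dset le Phi -> embed d \in undup s.
  by move=> d Hd; rewrite mem_undup inE map_f ?orbT // mem_enum.
move: (undup s) (undup_uniq s) Has Hds => us Hus Has Hds.
under eq_bigr do rewrite mulrBl; rewrite sumrB.
rewrite (bigD1_seq (embed a)) //= eqxx mul1r big1_seq; last first.
  by move=> m /andP [Hm _]; rewrite (negbTE Hm) mul0r.
rewrite addr0 => /eqP; rewrite subr_eq0 => /eqP ->.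
under eq_bigr do rewrite mulr_suml.
rewrite (exchange_big_dep (fun d => d \in Dset le Phi)); last by move=> m d _ /andP [].
apply: eq_bigr => d Hd.
rewrite big_mkcond (bigD1_seq (embed d)) ?Hds //= Hd eqxx /= big1_seq ?addr0 //.
by move=> m /andP [Hm _]; rewrite eq_sym (negbTE Hm) /=.
Qed.
End Helpers.

Theorem mainTheorem8 (F : finFieldType) (N : nat) (le : rel (mono N))
  (Hle : monomial_order le)
  (Psi : {set pt F N}) (HPsi : Psi != set0)
  (B : {set Aq F N}) (HB : B \subset Dset le Psi)
  (c : pt F N -> F)
  (Hc : forall b, b \in B -> \sum_(psi in Psi) c psi * mpow psi (embed b) = 0)
  (Phi : {set pt F N}) (HPhi0 : Phi != set0) (HPhi : Phi \subset Psi)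
  (HDPhi : Dset le Phi \subset B)
  (e : pt F N -> F) (He : forall psi, psi \in Psi -> psi \notin Phi -> e psi = 0) :
  let h := Pmap Psi c in
  let r := fun psi => c psi + e psi in
  let rt := Pmap Psi r in
  (* (i) *)
  (forall b, b \in B ->
     h b = 0 /\ rt b = \sum_(phi in Phi) e phi * mpow phi (embed b)) /\
  (* (ii) *)
  (forall v : Aq F N -> Aq F N -> F, is_remainder le Phi v ->
     forall d, d \in Dset le Psi -> h d = rt d - Emap le Phi v rt d) /\
  (* (iii): C_Phi (rt|_{D(Phi)}) = e|_Phi, C_Phi being the inverse of P_Phi *)
  ((forall d, d \in Dset le Phi -> Pmap Phi e d = rt d) /\
   (forall x : pt F N -> F, (forall d, d \in Dset le Phi -> Pmap Phi x d = rt d) ->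
      (forall phi, phi \in Phi -> x phi = e phi) /\
      (forall psi, psi \in Psi -> c psi = r psi - (if psi \in Phi then x psi else 0)))).
Proof.
move=> h r rt.
have Hrt : forall d : Aq F N, rt d = h d + \sum_(psi in Psi) e psi * mpow psi (embed d).
  by move=> d; rewrite /rt /h /Pmap -big_split; apply: eq_bigr => psi _; rewrite mulrDl.
have HeP : forall d : Aq F N, \sum_(psi in Psi) e psi * mpow psi (embed d) =
                     \sum_(phi in Phi) e phi * mpow phi (embed d).
  move=> d; rewrite (bigID (fun p => p \in Phi)) /= [X in _ + X]big1 ?addr0.
    apply: eq_bigl => p; apply/andP/idP => [[]//|Hp]; split => //.
    exact: subsetP HPhi p Hp.
  by move=> psi /andP [Hin Hn]; rewrite He // mul0r.
have Hi : forall b : Aq F N, b \in B ->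
     h b = 0 /\ rt b = \sum_(phi in Phi) e phi * mpow phi (embed b).
  move=> b Hb; have h0 : h b = 0 by exact: Hc.
  by split => //; rewrite Hrt h0 add0r HeP.
have Hiii : forall d : Aq F N, d \in Dset le Phi -> Pmap Phi e d = rt d.
  by move=> d Hd; rewrite (Hi d (subsetP HDPhi d Hd)).2.
split => //; split; last split => //.
  move=> v Hv d _; rewrite Hrt HeP.
  suff -> : Emap le Phi v rt d = \sum_(phi in Phi) e phi * mpow phi (embed d).
    by rewrite addrK.
  rewrite /Emap.
  under eq_bigr => d' Hd' do rewrite (Hi d' (subsetP HDPhi d' Hd')).2 mulr_sumr.
  rewrite exchange_big; apply: eq_bigr => phi Hphi.
  rewrite (rem_eval Hv d Hphi) mulr_sumr; apply: eq_bigr => d' _.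
  by rewrite mulrCA.
move=> x Hx.
have Hxe : forall phi, phi \in Phi -> x phi = e phi.
  move=> phi Hphi; apply/eqP; rewrite -subr_eq0; apply/eqP.
  apply: (key Hle (Phi := Phi) (z := fun p => x p - e p)) => // d Hd.
  have -> : Lf Phi (fun p => x p - e p) (embed d) = Pmap Phi x d - Pmap Phi e d.
    by rewrite /Lf /Pmap -sumrB; apply: eq_bigr => p _; rewrite mulrBl.
  by rewrite (Hx d Hd) (Hiii d Hd) subrr.
split => // psi Hpsi; rewrite /r; case: ifP => Hin.
  by rewrite Hxe // addrK.
by rewrite He ?Hin // !addr0 subr0.
Qed.
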